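(* Fix $\varepsilon\in(0,\nu_* )$ and $\xi\in\mathbb R$, let $r^\varepsilon(\cdot,\xi)\in C^1([\varepsilon,\nu_*])$ be real-valued, and let $h^\varepsilon(\cdot,\xi)\in C^2([\varepsilon,\nu_*])$ be the unique solution of $$h^\varepsilon_{\nu\nu}+k'(\nu)^2\xi^2h^\varepsilon=r^\varepsilon\ \text{ on }[\varepsilon,\nu_*],\qquad h^\varepsilon(\varepsilon,\xi)=h^\varepsilon_\nu(\varepsilon,\xi)=0.$$ Then there exists $C>0$ independent of $(\varepsilon,\xi,r^\varepsilon)$ such that, for $\nu\in[\varepsilon,\nu_*]$ and $\xi\neq0$, $$h^\varepsilon_\nu(\nu,\xi)^2+k'(\nu)^2\xi^2h^\varepsilon(\nu,\xi)^2\le C\sum_{j=1}^3I_j^\varepsilon(\nu,\xi),$$ where $I_1^\varepsilon=k'(\nu)^{-2}\xi^{-2}r^\varepsilon(\nu,\xi)^2$, $I_2^\varepsilon=\xi^{-2}\int_\varepsilon^\nu k'(\tau)^{-2}r^\varepsilon(\tau,\xi)^2d\tau$, $I_3^\varepsilon=\xi^{-2}\int_\varepsilon^\nu\frac{r^\varepsilon_\nu(\tau,\xi)^2}{|k'(\tau)k''(\tau)|+k'(\tau)^2}d\tau$. In addition, for every $\xi\in\mathbb R$ and $\nu\in[\varepsilon,\nu_*]$, $$h^\varepsilon_\nu(\nu,\xi)^2+k'(\nu)^2\xi^2h^\varepsilon(\nu,\xi)^2\le C\,\nu\int_\varepsilon^\nu r^\varepsilon(\tau,\xi)^2d\tau,$$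 with $C>0$ independent of $(\varepsilon,\xi,r^\varepsilon)$.
   Context: Standing setting ($\gamma=3$): $\varrho(\nu)$ is the inverse of $\nu(\varrho)=\int_0^\varrho\frac{\tau^2}{1-\tau^2}d\tau$, $\nu_{\rm cr}=\nu(1/\sqrt2)$, and $k$ is defined on $[0,\nu_{\rm cr}]$ by $k(0)=0$, $k'(\nu)=\sqrt{1-2\varrho(\nu)^2}/\varrho(\nu)^2$. In particular $k'>0$ and $k''<0$ on $(0,\nu_{\rm cr})$. $\nu_*\in(0,\nu_{\rm cr})$ is fixed. *)

(* Defs.v *)
From Stdlib Require Import Reals Lra ClassicalEpsilon.
From Coquelicot Require Import Coquelicot.
Open Scope R_scope.

Definition nu_of_rho (r : R) : R := RInt (fun t => t ^ 2 / (1 - t ^ 2)) 0 r.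

(* rho(nu): the inverse of nu_of_rho on [0,1) (nu_of_rho is strictly
   increasing there, so the value is unique when it exists). *)
Definition rho (nu : R) : R :=
  epsilon (inhabits 0) (fun r => 0 <= r < 1 /\ nu_of_rho r = nu).

Definition nu_cr : R := nu_of_rho (/ sqrt 2).

Definition kp (nu : R) : R := sqrt (1 - 2 * rho nu ^ 2) / rho nu ^ 2.

Definition kpp (nu : R) : R := Derive kp nu.

Definition cont_within (a b : R) (f : R -> R) (x : R) : Prop :=
  filterlim f (within (fun y => a <= y <= b) (locally x)) (locally (f x)).

Definition C1_on (a b : R) (f df : R -> R) : Prop :=
  (forall x, a < x < b -> is_derive f x (df x)) /\
  (forall x, a <= x <= b -> cont_within a b f x /\ cont_within a b df x).

Definition C2_on (a b : R) (f df d2f : R -> R) : Prop :=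
  C1_on a b f df /\ C1_on a b df d2f.

(* Main.v *)
Require Import Defs.
From Stdlib Require Import Reals Lra ClassicalEpsilon.
From Coquelicot Require Import Coquelicot.
Open Scope R_scope.


Definition gN (t : R) : R := t ^ 2 / (1 - t ^ 2).

Lemma gN_der : forall t, -1 < t < 1 -> ex_derive gN t.
Proof.
  intros t Ht. unfold gN. auto_derive. nra.
Qed.

Lemma gN_cont : forall t, -1 < t < 1 -> continuous gN t.
Proof. intros; apply (ex_derive_continuous (K:=R_AbsRing) (V:=R_NormedModule)), gN_der; auto. Qed.

Lemma gN_exRInt : forall a b, -1 < a < 1 -> -1 < b < 1 -> ex_RInt gN a b.
Proof.
  intros a b Ha Hb. apply (ex_RInt_continuous (V:=R_CompleteNormedModule)). intros z Hz.
  apply gN_cont. split.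
  - apply Rlt_le_trans with (Rmin a b); [|lra]. unfold Rmin; destruct Rle_dec; lra.
  - apply Rle_lt_trans with (Rmax a b); [lra|]. unfold Rmax; destruct Rle_dec; lra.
Qed.

Lemma nu_der : forall r, -1 < r < 1 -> is_derive nu_of_rho r (gN r).
Proof.
  intros r Hr. unfold nu_of_rho.
  apply (is_derive_RInt gN (fun b => RInt gN 0 b) 0 r).
  - apply (locally_interval _ r (-1) 1); simpl; try lra.
    intros y H1 H2. apply (RInt_correct (V:=R_CompleteNormedModule)). apply gN_exRInt; lra.
  - apply gN_cont; auto.
Qed.

Lemma nu_contpt : forall r, -1 < r < 1 -> continuity_pt nu_of_rho r.
Proof.
  intros r Hr. apply continuity_pt_filterlim.
  apply (ex_derive_continuous (K:=R_AbsRing) (V:=R_NormedModule) nu_of_rho r). eexists. apply nu_der; auto.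
Qed.

Lemma nu_0 : nu_of_rho 0 = 0.
Proof. unfold nu_of_rho. apply (RInt_point (V:=R_CompleteNormedModule)). Qed.

Lemma gN_pos : forall t, 0 < t < 1 -> 0 < gN t.
Proof. intros t Ht. unfold gN. apply Rdiv_lt_0_compat; nra. Qed.

Lemma nu_incr_pos : forall a b, 0 < a -> a < b -> b < 1 -> nu_of_rho a < nu_of_rho b.
Proof.
  intros a b Ha Hab Hb.
  destruct (MVT_gen nu_of_rho a b gN) as [c [Hc Heq]].
  - intros x Hx. apply nu_der. rewrite Rmin_left in Hx by lra.
    rewrite Rmax_right in Hx by lra. lra.
  - intros x Hx. apply nu_contpt. rewrite Rmin_left in Hx by lra.
    rewrite Rmax_right in Hx by lra. lra.
  - rewrite Rmin_left in Hc by lra. rewrite Rmax_right in Hc by lra.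
    assert (0 < gN c) by (apply gN_pos; lra). nra.
Qed.

Lemma nu_incr : forall a b, 0 <= a -> a < b -> b < 1 -> nu_of_rho a < nu_of_rho b.
Proof.
  intros a b Ha Hab Hb.
  destruct (Req_dec a 0) as [->|Ha0]; [|apply nu_incr_pos; lra].
  assert (H1 : nu_of_rho (b/2) < nu_of_rho b) by (apply nu_incr_pos; lra).
  destruct (MVT_gen nu_of_rho 0 (b/2) gN) as [c [Hc Heq]].
  - intros x Hx. apply nu_der. rewrite Rmin_left in Hx by lra.
    rewrite Rmax_right in Hx by lra. lra.
  - intros x Hx. apply nu_contpt. rewrite Rmin_left in Hx by lra.
    rewrite Rmax_right in Hx by lra. lra.
  - rewrite Rmin_left in Hc by lra. rewrite Rmax_right in Hc by lra.
    assert (0 <= gN c) by (unfold gN; apply Rmult_le_pos; [nra|]; apply Rlt_le, Rinv_0_lt_compat; nra).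
    nra.
Qed.

Definition sq : R := / sqrt 2.

Lemma sq_facts : 0 < sq < 1 /\ sq ^ 2 = / 2.
Proof.
  unfold sq. assert (H2 : 1 < sqrt 2).
  { rewrite <- sqrt_1. apply sqrt_lt_1; lra. }
  assert (Hs : sqrt 2 * sqrt 2 = 2) by (apply sqrt_sqrt; lra).
  split; [split|].
  - apply Rinv_0_lt_compat; lra.
  - rewrite <- Rinv_1. apply Rinv_lt_contravar; lra.
  - simpl. rewrite Rmult_1_r, <- Rinv_mult, Hs. reflexivity.
Qed.

Lemma exists_pre : forall x, 0 <= x <= nu_cr -> exists z, 0 <= z <= sq /\ nu_of_rho z = x.
Proof.
  intros x Hx. destruct sq_facts as [[H0 H1] _].
  destruct (Req_dec x 0) as [->|Hx0]; [exists 0; split; [lra|apply nu_0]|].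
  destruct (Req_dec x nu_cr) as [->|Hx1]; [exists sq; split; [lra|reflexivity]|].
  destruct (Ranalysis5.IVT_interv (fun z => nu_of_rho z - x) 0 sq) as [z [Hz Hz']].
  - intros a Ha. apply continuity_pt_minus; [apply nu_contpt; lra|apply continuity_pt_const; intros u v; auto].
  - destruct Hx as [[Hx|Hx] _]; [lra|congruence].
  - rewrite nu_0. lra.
  - cbv beta. unfold nu_cr in Hx, Hx1. fold sq in Hx, Hx1. destruct Hx as [_ [Hx|Hx]]; [lra|congruence].
  - exists z. split; [lra|]. cbv beta in Hz'. lra.
Qed.

Lemma rho_spec : forall x, 0 <= x <= nu_cr ->
  0 <= rho x <= sq /\ nu_of_rho (rho x) = x.
Proof.
  intros x Hx. destruct sq_facts as [[H0 H1] _].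
  destruct (exists_pre x Hx) as [z [Hz Hz']].
  assert (He : 0 <= rho x < 1 /\ nu_of_rho (rho x) = x).
  { unfold rho. apply epsilon_spec. exists z. split; [lra|auto]. }
  destruct He as [He1 He2]. split; [|auto]. split; [lra|].
  destruct (Rle_lt_dec (rho x) sq) as [|Hlt]; [auto|].
  exfalso. assert (nu_of_rho sq < nu_of_rho (rho x)) by (apply nu_incr; lra).
  unfold nu_cr in Hx. fold sq in Hx. lra.
Qed.

Lemma rho_strict : forall x, 0 < x < nu_cr -> 0 < rho x < sq.
Proof.
  intros x Hx. destruct (rho_spec x) as [[H1 H2] H3]; [lra|].
  destruct sq_facts as [[H0 H4] _].
  split.
  - destruct H1 as [|H1]; [auto|]. rewrite <- H1 in H3. rewrite nu_0 in H3. lra.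
  - destruct H2 as [|H2]; [auto|]. rewrite H2 in H3. unfold nu_cr in Hx. fold sq in Hx. lra.
Qed.

Lemma rho_mono : forall x y, 0 <= x <= y -> y <= nu_cr -> rho x <= rho y.
Proof.
  intros x y Hxy Hy. destruct (rho_spec x) as [[H1 H2] H3]; [lra|].
  destruct (rho_spec y) as [[H4 H5] H6]; [lra|].
  destruct sq_facts as [[H0 H7] _].
  destruct (Rle_lt_dec (rho x) (rho y)) as [|Hlt]; [auto|].
  assert (nu_of_rho (rho y) < nu_of_rho (rho x)) by (apply nu_incr; lra). lra.
Qed.

Lemma nu_cr_pos : 0 < nu_cr.
Proof.
  destruct sq_facts as [[H0 H7] _]. unfold nu_cr. fold sq.
  rewrite <- nu_0. apply nu_incr; lra.
Qed.

Lemma rho_cont : forall x, 0 < x < nu_cr -> continuity_pt rho x.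
Proof.
  intros x Hx. destruct sq_facts as [[H0 H7] _].
  apply (Ranalysis5.continuity_pt_recip_interv nu_of_rho rho 0 sq H0).
  - intros a b Ha Hab Hb. apply nu_incr; lra.
  - intros y Hy1 Hy2. rewrite nu_0 in Hy1. unfold nu_cr in Hx. fold sq in Hx.
    unfold comp, id. apply rho_spec. unfold nu_cr; fold sq. lra.
  - intros y Hy1 Hy2. rewrite nu_0 in Hy1. apply rho_spec. unfold nu_cr; fold sq. lra.
  - intros a Ha. apply nu_contpt. lra.
  - rewrite nu_0. unfold nu_cr in Hx. fold sq in Hx. lra.
Qed.

Lemma rho_der : forall x, 0 < x < nu_cr -> is_derive rho x (/ gN (rho x)).
Proof.
  intros x Hx. destruct sq_facts as [[H0 H7] _]. pose proof nu_cr_pos.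
  assert (Prf : forall a, rho 0 <= a <= rho nu_cr -> derivable_pt nu_of_rho a).
  { intros a Ha. destruct (rho_spec 0) as [[? ?] _]; [lra|].
    destruct (rho_spec nu_cr) as [[? ?] _]; [lra|].
    exists (gN a). apply is_derive_Reals. apply nu_der. lra. }
  assert (Pinc : rho 0 <= rho x <= rho nu_cr).
  { split; apply rho_mono; lra. }
  pose proof (rho_strict x Hx) as Hr.
  assert (Hd : derive_pt nu_of_rho (rho x) (Prf (rho x) Pinc) = gN (rho x)).
  { apply derive_pt_eq_0. apply is_derive_Reals. apply nu_der. lra. }
  pose proof (Ranalysis5.derivable_pt_lim_recip_interv nu_of_rho rho 0 nu_cr x Prf
     (rho_cont x Hx) H ltac:(lra) Pinc) as HH.
  rewrite Hd in HH. apply is_derive_Reals.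
  replace (/ gN (rho x)) with (1 / gN (rho x)) by (unfold Rdiv; ring).
  apply HH.
  - intros y Hy. unfold comp, id. apply rho_spec. lra.
  - pose proof (gN_pos (rho x)). lra.
Qed.

Definition Fk (s : R) : R := sqrt (1 - 2 * s ^ 2) / s ^ 2.
Definition Fd (s : R) : R := - 2 / (s * sqrt (1 - 2 * s ^ 2)) - 2 * sqrt (1 - 2 * s ^ 2) / s ^ 3.

Lemma Fk_der : forall s, 0 < s < sq -> is_derive Fk s (Fd s).
Proof.
  intros s Hs. destruct sq_facts as [[H0 H1] H2].
  assert (Hp : 0 < 1 - 2 * s ^ 2) by nra.
  assert (HS : 0 < sqrt (1 - 2 * s ^ 2)) by (apply sqrt_lt_R0; lra).
  assert (HSS : sqrt (1 - 2 * s ^ 2) * sqrt (1 - 2 * s ^ 2) = 1 - 2 * s ^ 2) by (apply sqrt_sqrt; lra).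
  unfold Fk, Fd. auto_derive.
  - split; [lra|]. split; [|auto]. nra.
  - replace (1 + - (2 * (s * (s * 1)))) with (1 - 2 * s ^ 2) by ring.
    set (S := sqrt (1 - 2 * s ^ 2)) in *. field. lra.
Qed.

Definition K2 (x : R) : R := Fd (rho x) * / gN (rho x).

Lemma kp_der : forall x, 0 < x < nu_cr -> is_derive kp x (K2 x).
Proof.
  intros x Hx. pose proof (rho_strict x Hx) as Hr.
  unfold K2. rewrite Rmult_comm.
  change kp with (fun y => Fk (rho y)).
  apply (is_derive_comp Fk rho). apply Fk_der; auto. apply rho_der; auto.
Qed.

Lemma kpp_eq : forall x, 0 < x < nu_cr -> kpp x = K2 x.
Proof. intros x Hx. unfold kpp. apply is_derive_unique, kp_der; auto. Qed.

Lemma kp_pos : forall x, 0 < x < nu_cr -> 0 < kp x.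
Proof.
  intros x Hx. pose proof (rho_strict x Hx) as Hr. destruct sq_facts as [[H0 H1] H2].
  unfold kp. apply Rdiv_lt_0_compat; [apply sqrt_lt_R0|]; nra.
Qed.

Lemma K2_neg : forall x, 0 < x < nu_cr -> K2 x < 0.
Proof.
  intros x Hx. pose proof (rho_strict x Hx) as Hr. destruct sq_facts as [[H0 H1] H2].
  pose proof (gN_pos (rho x) ltac:(lra)).
  set (s := rho x) in *.
  assert (HS : 0 < sqrt (1 - 2 * s ^ 2)) by (apply sqrt_lt_R0; nra).
  unfold K2. fold s. apply Rmult_neg_pos; [|apply Rinv_0_lt_compat; auto].
  unfold Fd. assert (0 < 2 / (s * sqrt (1 - 2 * s ^ 2))) by (apply Rdiv_lt_0_compat; [lra|apply Rmult_lt_0_compat; lra]).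
  assert (0 < 2 * sqrt (1 - 2 * s ^ 2) / s ^ 3) by (apply Rdiv_lt_0_compat; [lra|apply pow_lt; lra]).
  unfold Rdiv in *. lra.
Qed.

Lemma kp_cont : forall x, 0 < x < nu_cr -> continuous kp x.
Proof.
  intros x Hx. apply (ex_derive_continuous (K:=R_AbsRing) (V:=R_NormedModule)).
  eexists. apply kp_der; auto.
Qed.

Lemma kpp_cont : forall x, 0 < x < nu_cr -> continuous kpp x.
Proof.
  intros x Hx.
  apply (continuous_ext_loc (T:=R_UniformSpace) (U:=R_UniformSpace) kpp K2).
  { apply (locally_interval _ x 0 nu_cr); simpl; try lra.
    intros y H1 H2. symmetry. apply kpp_eq. lra. }
  pose proof (rho_strict x Hx) as Hr. destruct sq_facts as [[H0 H1] H2].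
  unfold K2. apply (continuous_comp rho (fun s => Fd s * / gN s)).
  - apply continuity_pt_filterlim, rho_cont; auto.
  - apply (ex_derive_continuous (K:=R_AbsRing) (V:=R_NormedModule)).
    set (s := rho x) in *.
    assert (HS : 0 < sqrt (1 - 2 * s ^ 2)) by (apply sqrt_lt_R0; nra).
    unfold Fd, gN. auto_derive.
    replace (1 + - (2 * (s * (s * 1)))) with (1 - 2 * s ^ 2) by ring.
    assert (0 < s * s) by nra. assert (0 < 1 - s * s) by nra.
    repeat split; try nra.
    apply Rgt_not_eq, Rmult_lt_0_compat; [nra|apply Rinv_0_lt_compat; nra].
Qed.

Definition cl (a b x : R) : R := Rmax a (Rmin b x).

Lemma cl_lip : forall a b x y, a <= b -> Rabs (cl a b x - cl a b y) <= Rabs (x - y).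
Proof.
  intros a b x y Hab. unfold cl, Rmax, Rmin.
  repeat (destruct Rle_dec); unfold Rabs; repeat destruct Rcase_abs; lra.
Qed.

Lemma cl_in : forall a b x, a <= b -> a <= cl a b x <= b.
Proof. intros a b x H. unfold cl, Rmax, Rmin. repeat destruct Rle_dec; lra. Qed.

Lemma cl_id : forall a b x, a <= x <= b -> cl a b x = x.
Proof. intros a b x H. unfold cl, Rmax, Rmin. repeat destruct Rle_dec; lra. Qed.

Lemma cl_cont : forall a b y, a <= b -> continuity_pt (cl a b) y.
Proof.
  intros a b y Hab eps Heps. exists eps. split; auto.
  intros x [_ Hx]. simpl in *. unfold R_dist in *.
  eapply Rle_lt_trans; [apply cl_lip; auto| auto].
Qed.

Lemma clamp_cont : forall a b f, a <= b ->
  (forall x, a <= x <= b -> cont_within a b f x) ->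
  forall y, continuous (fun x => f (cl a b x)) y.
Proof.
  intros a b f Hab Hf y.
  apply (filterlim_comp _ _ _ (cl a b) f (locally y)
          (within (fun z => a <= z <= b) (locally (cl a b y)))).
  - intros Q HQ. unfold within in HQ.
    pose proof (proj1 (continuity_pt_filterlim (cl a b) y) (cl_cont a b y Hab)) as Hc.
    specialize (Hc _ HQ). unfold filtermap in *.
    apply (filter_imp (fun x => a <= cl a b x <= b -> Q (cl a b x))); auto.
    intros x Hx. apply Hx, cl_in; auto.
  - apply Hf, cl_in; auto.
Qed.

Lemma decr_lemma : forall (F dF : R -> R) c d, c <= d ->
  (forall x, c <= x <= d -> continuous F x) ->
  (forall x, c < x < d -> is_derive F x (dF x)) ->
  (forall x, c < x < d -> dF x <= 0) -> F d <= F c.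
Proof.
  intros F dF c d Hcd Hc Hd Hn.
  destruct (Req_dec c d) as [->|Hne]; [lra|].
  assert (pr1 : forall z, c < z < d -> derivable_pt F z).
  { intros z Hz. exists (dF z). apply is_derive_Reals. auto. }
  assert (pr2 : forall z, c < z < d -> derivable_pt id z).
  { intros z Hz. apply derivable_pt_id. }
  destruct (MVT F id c d pr1 pr2) as [z [P Heq]].
  - lra.
  - intros x Hx. apply (proj2 (continuity_pt_filterlim F x)). apply Hc. exact Hx.
  - intros y Hy. exact (derivable_continuous_pt id y (derivable_pt_id y)).
  - rewrite (derive_pt_eq_0 F z (dF z) (pr1 z P)) in Heq by (apply is_derive_Reals; auto).
    rewrite (derive_pt_eq_0 id z 1 (pr2 z P)) in Heq by (apply derivable_pt_lim_id).
    unfold id in Heq. specialize (Hn z P). nra.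
Qed.

Lemma D_eq : forall (f : R -> R) x l l', is_derive f x l -> l = l' -> is_derive f x l'.
Proof. intros; subst; auto. Qed.
Lemma D_plus : forall f g x df dg, is_derive f x df -> is_derive g x dg ->
  is_derive (fun t => f t + g t) x (df + dg).
Proof. intros. apply (is_derive_plus (K:=R_AbsRing) (V:=R_NormedModule)); auto. Qed.
Lemma D_minus : forall f g x df dg, is_derive f x df -> is_derive g x dg ->
  is_derive (fun t => f t - g t) x (df - dg).
Proof. intros. apply (is_derive_minus (K:=R_AbsRing) (V:=R_NormedModule)); auto. Qed.
Lemma D_mult : forall f g x df dg, is_derive f x df -> is_derive g x dg ->
  is_derive (fun t => f t * g t) x (df * g x + f x * dg).
Proof. intros. apply (is_derive_mult (K:=R_AbsRing)); auto. intros; apply Rmult_comm. Qed.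
Lemma D_sq : forall f x df, is_derive f x df ->
  is_derive (fun t => f t ^ 2) x (2 * f x * df).
Proof. intros. eapply D_eq. apply (is_derive_pow f 2); eauto. simpl; ring. Qed.
Lemma D_const : forall c x, is_derive (fun _ => c) x 0.
Proof. intros. apply (is_derive_const (K:=R_AbsRing) (V:=R_NormedModule)). Qed.
Lemma D_scal : forall f x k df, is_derive f x df -> is_derive (fun t => k * f t) x (k * df).
Proof. intros. apply is_derive_scal; auto. Qed.
Lemma D_expl : forall c a x, is_derive (fun t => exp (c * (t - a))) x (c * exp (c * (x - a))).
Proof. intros. auto_derive. auto. unfold Rminus. ring. Qed.

Lemma C_plus : forall (f g : R -> R) x, continuous f x -> continuous g x -> continuous (fun t => f t + g t) x.
Proof. intros. apply (continuous_plus (U:=R_UniformSpace) (V:=R_NormedModule)); auto. Qed.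
Lemma C_minus : forall (f g : R -> R) x, continuous f x -> continuous g x -> continuous (fun t => f t - g t) x.
Proof. intros. apply (continuous_minus (U:=R_UniformSpace) (V:=R_NormedModule)); auto. Qed.
Lemma C_mult : forall (f g : R -> R) x, continuous f x -> continuous g x -> continuous (fun t => f t * g t) x.
Proof. intros. apply (continuous_mult (U:=R_UniformSpace) (K:=R_AbsRing)); auto. Qed.
Lemma C_sq : forall (f : R -> R) x, continuous f x -> continuous (fun t => f t ^ 2) x.
Proof. intros. apply (continuous_ext (fun t => f t * f t)). intros; simpl; ring. apply C_mult; auto. Qed.
Lemma C_const : forall (c x : R), @continuous R_UniformSpace R_UniformSpace (fun _ : R => c) x.
Proof. intros. apply (continuous_const (U:=R_UniformSpace) (V:=R_UniformSpace)). Qed.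
Lemma C_der : forall (f : R -> R) x l, is_derive f x l -> continuous f x.
Proof. intros. apply (ex_derive_continuous (K:=R_AbsRing) (V:=R_NormedModule)). eexists; eauto. Qed.
Lemma C_expl : forall c a x, continuous (fun t => exp (c * (t - a))) x.
Proof. intros. eapply C_der. apply D_expl. Qed.

Lemma RInt_der_all : forall (f : R -> R) a t, (forall y, continuous f y) ->
  is_derive (fun s => RInt f a s) t (f t).
Proof.
  intros f a t Hf. apply (is_derive_RInt f (fun s => RInt f a s) a t).
  - apply filter_forall. intros y. apply (RInt_correct (V:=R_CompleteNormedModule)).
    apply (ex_RInt_continuous (V:=R_CompleteNormedModule)). intros; apply Hf.
  - apply Hf.
Qed.

Lemma RInt_nonneg_cont : forall (f : R -> R) a b, a <= b ->
  (forall y, a <= y <= b -> continuous f y) -> (forall y, a < y < b -> 0 <= f y) ->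
  0 <= RInt f a b.
Proof.
  intros f a b Hab Hc Hp. apply RInt_ge_0; auto.
  apply (ex_RInt_continuous (V:=R_CompleteNormedModule)).
  intros z Hz. rewrite Rmin_left in Hz by lra. rewrite Rmax_right in Hz by lra. auto.
Qed.

Lemma exp_le' : forall x y, x <= y -> exp x <= exp y.
Proof. intros x y [H|H]; [left; apply exp_increasing; auto|subst; lra]. Qed.

Lemma energy2 : forall a b xi r dr h dh d2h nu,
  0 < a < b -> b < nu_cr ->
  C1_on a b r dr -> C2_on a b h dh d2h ->
  (forall x, a <= x <= b -> d2h x + kp x ^ 2 * xi ^ 2 * h x = r x) ->
  h a = 0 -> dh a = 0 -> a < nu <= b -> forall C, 3 <= C ->
  dh nu ^ 2 + kp nu ^ 2 * xi ^ 2 * h nu ^ 2 <= C * nu * RInt (fun t => r t ^ 2) a nu.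
Proof.
  intros a b xi r dr h dh d2h nu Hab Hb [Hr1 Hr2] [[Hh1 Hh2] [Hd1 Hd2]] Hode H0 H1 Hnu CC HCC.
  set (cH := fun t => h (cl a b t)). set (cD := fun t => dh (cl a b t)).
  set (cR := fun t => r (cl a b t)).
  assert (HcH : forall y, continuous cH y) by (apply clamp_cont; [lra|intros; apply Hh2; auto]).
  assert (HcD : forall y, continuous cD y) by (apply clamp_cont; [lra|intros; apply Hd2; auto]).
  assert (HcR : forall y, continuous cR y) by (apply clamp_cont; [lra|intros; apply Hr2; auto]).
  set (I := fun t => RInt (fun s => cR s ^ 2) a t).
  assert (HI : forall t, is_derive I t (cR t ^ 2)).
  { intros t. apply RInt_der_all. intros y. apply C_sq. auto. }
  set (c := - / nu).
  set (Phi := fun t => (cD t ^ 2 + kp t ^ 2 * xi ^ 2 * cH t ^ 2) * exp (c * (t - a)) - nu * I t).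
  set (Psi := fun t => (dh t ^ 2 + kp t ^ 2 * xi ^ 2 * h t ^ 2) * exp (c * (t - a)) - nu * I t).
  set (dPsi := fun t => (2 * dh t * d2h t + (2 * kp t * kpp t * xi ^ 2 * h t ^ 2
        + kp t ^ 2 * xi ^ 2 * (2 * h t * dh t))) * exp (c * (t - a))
        + (dh t ^ 2 + kp t ^ 2 * xi ^ 2 * h t ^ 2) * (c * exp (c * (t - a))) - nu * cR t ^ 2).
  assert (Hdec : Phi nu <= Phi a).
  { apply (decr_lemma Phi dPsi a nu); [lra| | |].
    - intros t Ht. unfold Phi.
      assert (Hk : continuous kp t) by (apply kp_cont; lra).
      apply C_minus; [apply C_mult|].
      + apply C_plus; [apply C_sq; auto|]. apply C_mult; [apply C_mult; [apply C_sq; auto|apply C_const]|apply C_sq; auto].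
      + apply C_expl.
      + apply C_mult; [apply C_const|]. eapply C_der; apply HI.
    - intros t Ht.
      apply (is_derive_ext_loc Psi).
      + apply (locally_interval _ t a b); simpl; try lra.
        intros y Hy1 Hy2. unfold Psi, Phi, cD, cH. rewrite cl_id by lra. reflexivity.
      + unfold Psi, dPsi. apply D_minus; [|apply D_scal; apply HI].
        apply (D_mult (fun t => dh t ^ 2 + kp t ^ 2 * xi ^ 2 * h t ^ 2) (fun t => exp (c * (t - a)))); [|apply D_expl].
        apply (D_plus (fun t => dh t ^ 2) (fun t => kp t ^ 2 * xi ^ 2 * h t ^ 2)); [apply D_sq; apply Hd1; lra|].
        eapply D_eq.
        { apply (D_mult (fun t => kp t ^ 2 * xi ^ 2) (fun t => h t ^ 2)); [|apply D_sq; apply Hh1; lra].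
          apply (D_mult (fun t => kp t ^ 2) (fun _ => xi ^ 2)); [apply D_sq; apply kp_der; lra|apply D_const]. }
        rewrite (kpp_eq t) by lra. match goal with |- ?x = ?y => change (@eq R x y) end. ring.
    - intros t Ht. unfold dPsi.
      assert (Hdd : d2h t = r t - kp t ^ 2 * xi ^ 2 * h t) by (rewrite <- (Hode t) by lra; ring).
      assert (HR : cR t = r t) by (unfold cR; rewrite cl_id by lra; auto).
      rewrite Hdd, HR, (kpp_eq t) by lra.
      assert (Hk : 0 < kp t) by (apply kp_pos; lra).
      assert (Hk2 : K2 t < 0) by (apply K2_neg; lra).
      assert (He : 0 < exp (c * (t - a)) <= 1).
      { split; [apply exp_pos|]. rewrite <- exp_0. apply exp_le'.
        unfold c. assert (0 < / nu) by (apply Rinv_0_lt_compat; lra). nra. }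
      set (e := exp (c * (t - a))) in *.
      set (D := dh t) in *. set (Hv := h t) in *. set (Rv := r t) in *. set (K := kp t) in *. set (KP := K2 t) in *.
      assert (Hn : nu <> 0) by lra.
      assert (Hw : 0 < / nu) by (apply Rinv_0_lt_compat; lra).
      set (w := / nu) in *.
      assert (Heq : (2 * D * (Rv - K ^ 2 * xi ^ 2 * Hv) +
           (2 * K * KP * xi ^ 2 * Hv ^ 2 + K ^ 2 * xi ^ 2 * (2 * Hv * D))) * e +
           (D ^ 2 + K ^ 2 * xi ^ 2 * Hv ^ 2) * (c * e) - nu * Rv ^ 2
           = - (e * nu * (D * w - Rv) ^ 2) + (e - 1) * nu * Rv ^ 2
             + 2 * e * (K * KP) * (xi * Hv) ^ 2 - w * e * (K * xi * Hv) ^ 2).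
      { unfold c, w. field. auto. }
      rewrite Heq.
      assert (0 <= e * nu * (D * w - Rv) ^ 2) by (apply Rmult_le_pos; [nra|apply pow2_ge_0]).
      assert ((e - 1) * nu * Rv ^ 2 <= 0).
      { assert (0 <= (1 - e) * nu * Rv ^ 2) by (apply Rmult_le_pos; [nra|apply pow2_ge_0]). nra. }
      assert (2 * e * (K * KP) * (xi * Hv) ^ 2 <= 0).
      { assert (0 <= 2 * e * (K * - KP) * (xi * Hv) ^ 2) by (apply Rmult_le_pos; [apply Rmult_le_pos; [lra|apply Rmult_le_pos; lra]|apply pow2_ge_0]). nra. }
      assert (0 <= w * e * (K * xi * Hv) ^ 2) by (apply Rmult_le_pos; [nra|apply pow2_ge_0]).
      lra. }
  assert (HIa : I a = 0) by (unfold I; apply (RInt_point (V:=R_CompleteNormedModule))).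
  assert (HInu : I nu = RInt (fun t => r t ^ 2) a nu).
  { unfold I. apply (RInt_ext (V:=R_CompleteNormedModule)). intros x Hx.
    rewrite Rmin_left in Hx by lra. rewrite Rmax_right in Hx by lra.
    unfold cR. rewrite cl_id by lra. reflexivity. }
  assert (HIpos : 0 <= RInt (fun t => r t ^ 2) a nu).
  { rewrite <- HInu. unfold I. apply RInt_nonneg_cont; [lra| |].
    intros; apply C_sq; auto. intros; apply pow2_ge_0. }
  unfold Phi in Hdec. rewrite HIa in Hdec.
  unfold cD, cH in Hdec. rewrite !cl_id in Hdec by lra.
  rewrite H0, H1, HInu in Hdec.
  replace (a - a) with 0 in Hdec by ring. rewrite Rmult_0_r, exp_0 in Hdec.
  set (E := dh nu ^ 2 + kp nu ^ 2 * xi ^ 2 * h nu ^ 2) in *.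
  set (J := RInt (fun t => r t ^ 2) a nu) in *.
  assert (Hex : exp (c * (nu - a)) * exp (- c * (nu - a)) = 1).
  { rewrite <- exp_plus. replace (c * (nu - a) + - c * (nu - a)) with 0 by ring. apply exp_0. }
  assert (Hb1 : exp (- c * (nu - a)) <= 3).
  { apply Rle_trans with (exp 1); [|apply exp_le_3]. apply exp_le'.
    unfold c. replace (- - / nu * (nu - a)) with (1 - a / nu) by (field; lra).
    assert (0 < a / nu) by (apply Rdiv_lt_0_compat; lra). lra. }
  assert (Hp : 0 < exp (- c * (nu - a))) by apply exp_pos.
  assert (HE : E <= nu * J * exp (- c * (nu - a))).
  { replace E with (E * exp (c * (nu - a)) * exp (- c * (nu - a))) by (rewrite Rmult_assoc, Hex; ring).
    apply Rmult_le_compat_r; lra. }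
  assert (0 <= nu * J) by (apply Rmult_le_pos; lra).
  assert (nu * J * exp (- c * (nu - a)) <= nu * J * 3) by (apply Rmult_le_compat_l; lra).
  assert (nu * J * 3 <= nu * J * CC) by (apply Rmult_le_compat_l; lra).
  nra.
Qed.

Lemma C_inv : forall (f : R -> R) x, continuous f x -> f x <> 0 -> continuous (fun t => / f t) x.
Proof.
  intros f x Hf Hn. apply (continuous_comp f Rinv); auto.
  apply (ex_derive_continuous (K:=R_AbsRing) (V:=R_NormedModule)). auto_derive. auto.
Qed.

Lemma C_abs : forall (f : R -> R) x, continuous f x -> continuous (fun t => Rabs (f t)) x.
Proof. intros. apply continuous_Rabs_comp. auto. Qed.

Lemma C_div : forall (f g : R -> R) x, continuous f x -> continuous g x -> g x <> 0 ->
  continuous (fun t => f t / g t) x.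
Proof. intros. unfold Rdiv. apply C_mult; auto. apply C_inv; auto. Qed.

Lemma RInt_der_loc : forall (f : R -> R) a t, 0 < a < nu_cr -> 0 < t < nu_cr ->
  (forall z, 0 < z < nu_cr -> continuous f z) -> is_derive (fun s => RInt f a s) t (f t).
Proof.
  intros f a t Ha Ht Hf. apply (is_derive_RInt f (fun s => RInt f a s) a t).
  - apply (locally_interval _ t 0 nu_cr); simpl; try lra.
    intros y Hy1 Hy2. apply (RInt_correct (V:=R_CompleteNormedModule)).
    apply (ex_RInt_continuous (V:=R_CompleteNormedModule)). intros z Hz. apply Hf.
    split.
    + apply Rlt_le_trans with (Rmin a y); [|lra]. unfold Rmin; destruct Rle_dec; lra.
    + apply Rle_lt_trans with (Rmax a y); [lra|]. unfold Rmax; destruct Rle_dec; lra.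
  - apply Hf; auto.
Qed.

Lemma energy1 : forall a b xi r dr h dh d2h nu,
  0 < a < b -> b < nu_cr -> xi <> 0 ->
  C1_on a b r dr -> C2_on a b h dh d2h ->
  (forall x, a <= x <= b -> d2h x + kp x ^ 2 * xi ^ 2 * h x = r x) ->
  h a = 0 -> dh a = 0 -> a < nu <= b ->
  dh nu ^ 2 + kp nu ^ 2 * xi ^ 2 * h nu ^ 2 <=
  (8 * exp (2 * b) + 4) * ( / (kp nu ^ 2 * xi ^ 2) * r nu ^ 2
               + / xi ^ 2 * RInt (fun t => / kp t ^ 2 * r t ^ 2) a nu
               + / xi ^ 2 * RInt (fun t => dr t ^ 2 /
                     (Rabs (kp t * kpp t) + kp t ^ 2)) a nu).
Proof.
  intros a b xi r dr h dh d2h nu Hab Hb Hxi [Hr1 Hr2] [[Hh1 Hh2] [Hd1 Hd2]] Hode H0 H1 Hnu.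
  set (cH := fun t => h (cl a b t)). set (cD := fun t => dh (cl a b t)).
  set (cR := fun t => r (cl a b t)). set (cDR := fun t => dr (cl a b t)).
  assert (HcH : forall y, continuous cH y) by (apply clamp_cont; [lra|intros; apply Hh2; auto]).
  assert (HcD : forall y, continuous cD y) by (apply clamp_cont; [lra|intros; apply Hd2; auto]).
  assert (HcR : forall y, continuous cR y) by (apply clamp_cont; [lra|intros; apply Hr2; auto]).
  assert (HcDR : forall y, continuous cDR y) by (apply clamp_cont; [lra|intros; apply Hr2; auto]).
  set (fA := fun s => / kp s ^ 2 * cR s ^ 2).
  set (fB := fun s => cDR s ^ 2 / (Rabs (kp s * kpp s) + kp s ^ 2)).
  assert (HfA : forall z, 0 < z < nu_cr -> continuous fA z).
  { intros z Hz. assert (0 < kp z) by (apply kp_pos; auto).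
    apply C_mult; [|apply C_sq; auto]. apply C_inv; [apply C_sq, kp_cont; auto|].
    apply Rgt_not_eq. apply pow_lt. auto. }
  assert (HfB : forall z, 0 < z < nu_cr -> continuous fB z).
  { intros z Hz. assert (0 < kp z) by (apply kp_pos; auto).
    apply C_div; [apply C_sq; auto| |].
    - apply C_plus; [apply C_abs; apply C_mult; [apply kp_cont|apply kpp_cont]; auto|apply C_sq, kp_cont; auto].
    - apply Rgt_not_eq. pose proof (Rabs_pos (kp z * kpp z)). pose proof (pow_lt (kp z) 2 H). lra. }
  set (IA := fun t => RInt fA a t). set (IB := fun t => RInt fB a t).
  assert (HIA : forall t, 0 < t < nu_cr -> is_derive IA t (fA t)).
  { intros t Ht. apply RInt_der_loc; auto. lra. }
  assert (HIB : forall t, 0 < t < nu_cr -> is_derive IB t (fB t)).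
  { intros t Ht. apply RInt_der_loc; auto. lra. }
  set (ix := / xi ^ 2).
  set (Phi := fun t => (cD t ^ 2 + kp t ^ 2 * xi ^ 2 * cH t ^ 2 - 2 * cH t * cR t) * exp ((-2) * (t - a))
       - 4 * (ix * IA t) - ix * IB t).
  set (Psi := fun t => (dh t ^ 2 + kp t ^ 2 * xi ^ 2 * h t ^ 2 - 2 * h t * r t) * exp ((-2) * (t - a))
       - 4 * (ix * IA t) - ix * IB t).
  set (dPsi := fun t => (2 * dh t * d2h t + (2 * kp t * kpp t * xi ^ 2 * h t ^ 2
        + kp t ^ 2 * xi ^ 2 * (2 * h t * dh t)) - 2 * (dh t * r t + h t * dr t)) * exp ((-2) * (t - a))
        + (dh t ^ 2 + kp t ^ 2 * xi ^ 2 * h t ^ 2 - 2 * h t * r t) * ((-2) * exp ((-2) * (t - a)))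
        - 4 * (ix * fA t) - ix * fB t).
  assert (Hdec : Phi nu <= Phi a).
  { apply (decr_lemma Phi dPsi a nu); [lra| | |].
    - intros t Ht. unfold Phi.
      assert (Hk : continuous kp t) by (apply kp_cont; lra).
      apply C_minus; [apply C_minus; [apply C_mult|]|].
      + apply C_minus; [apply C_plus; [apply C_sq; auto|]|].
        * apply C_mult; [apply C_mult; [apply C_sq; auto|apply C_const]|apply C_sq; auto].
        * apply C_mult; [apply C_mult; [apply C_const|auto]|auto].
      + apply C_expl.
      + apply C_mult; [apply C_const|]. apply C_mult; [apply C_const|]. eapply C_der; apply HIA; lra.
      + apply C_mult; [apply C_const|]. eapply C_der; apply HIB; lra.
    - intros t Ht.
      apply (is_derive_ext_loc Psi).
      + apply (locally_interval _ t a b); simpl; try lra.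
        intros y Hy1 Hy2. unfold Psi, Phi, cD, cH, cR. rewrite cl_id by lra. reflexivity.
      + unfold Psi, dPsi.
        apply D_minus; [apply D_minus|apply D_scal; apply HIB; lra].
        2: { apply D_scal. apply D_scal. apply HIA; lra. }
        apply (D_mult (fun t => dh t ^ 2 + kp t ^ 2 * xi ^ 2 * h t ^ 2 - 2 * h t * r t) (fun t => exp ((-2) * (t - a)))); [|apply D_expl].
        apply (D_minus (fun t => dh t ^ 2 + kp t ^ 2 * xi ^ 2 * h t ^ 2) (fun t => 2 * h t * r t)).
        * apply (D_plus (fun t => dh t ^ 2) (fun t => kp t ^ 2 * xi ^ 2 * h t ^ 2)); [apply D_sq; apply Hd1; lra|].
          eapply D_eq.
          { apply (D_mult (fun t => kp t ^ 2 * xi ^ 2) (fun t => h t ^ 2)); [|apply D_sq; apply Hh1; lra].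
            apply (D_mult (fun t => kp t ^ 2) (fun _ => xi ^ 2)); [apply D_sq; apply kp_der; lra|apply D_const]. }
          rewrite (kpp_eq t) by lra. match goal with |- ?x = ?y => change (@eq R x y) end. ring.
        * eapply D_eq.
          { apply (D_mult (fun t => 2 * h t) (fun t => r t)); [apply D_scal; apply Hh1; lra|apply Hr1; lra]. }
          match goal with |- ?x = ?y => change (@eq R x y) end. ring.
    - intros t Ht. unfold dPsi, fA, fB.
      assert (Hdd : d2h t = r t - kp t ^ 2 * xi ^ 2 * h t) by (rewrite <- (Hode t) by lra; ring).
      assert (HR : cR t = r t) by (unfold cR; rewrite cl_id by lra; auto).
      assert (HDR : cDR t = dr t) by (unfold cDR; rewrite cl_id by lra; auto).
      rewrite Hdd, HR, HDR, (kpp_eq t) by lra.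
      assert (Hk : 0 < kp t) by (apply kp_pos; lra).
      assert (Hk2 : K2 t < 0) by (apply K2_neg; lra).
      assert (He : 0 < exp ((-2) * (t - a)) <= 1).
      { split; [apply exp_pos|]. rewrite <- exp_0. apply exp_le'. nra. }
      set (e := exp ((-2) * (t - a))) in *.
      set (D := dh t) in *. set (Hv := h t) in *. set (Rv := r t) in *. set (K := kp t) in *.
      set (P := K2 t) in *. set (DR := dr t) in *.
      assert (Habs : Rabs (K * P) = - (K * P)) by (apply Rabs_left; nra).
      rewrite Habs.
      assert (Hx2 : 0 < xi ^ 2) by (apply pow2_gt_0; auto).
      assert (Hw : 0 < - (K * P) + K ^ 2) by nra.
      set (w := - (K * P) + K ^ 2) in *.
      assert (Hq : 0 < K ^ 2 * xi ^ 2) by (apply Rmult_lt_0_compat; nra).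
      set (q := K ^ 2 * xi ^ 2) in *.
      assert (Hix : 0 < ix) by (unfold ix; apply Rinv_0_lt_compat; auto).
      assert (HA : 0 <= / K ^ 2 * Rv ^ 2) by (apply Rmult_le_pos; [apply Rlt_le, Rinv_0_lt_compat; nra|apply pow2_ge_0]).
      assert (HB : 0 <= DR ^ 2 / w) by (apply Rmult_le_pos; [apply pow2_ge_0|apply Rlt_le, Rinv_0_lt_compat; lra]).
      apply (Rle_trans _ (e * (K * P * xi ^ 2 * Hv ^ 2 - 2 * D ^ 2 - w * xi ^ 2 * (Hv + DR / (w * xi ^ 2)) ^ 2
                 - q * (Hv - 2 * Rv / q) ^ 2)
            + (e - 1) * (4 * (ix * (/ K ^ 2 * Rv ^ 2)) + ix * (DR ^ 2 / w)))).
      { right. unfold q, w, ix. field. repeat split; try lra; apply Rgt_not_eq; try nra; auto. }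
      assert (HN : K * P * xi ^ 2 * Hv ^ 2 - 2 * D ^ 2 - w * xi ^ 2 * (Hv + DR / (w * xi ^ 2)) ^ 2
                 - q * (Hv - 2 * Rv / q) ^ 2 <= 0).
      { assert (0 <= - (K * P) * xi ^ 2 * Hv ^ 2) by (apply Rmult_le_pos; [apply Rmult_le_pos; nra|apply pow2_ge_0]).
        assert (0 <= w * xi ^ 2 * (Hv + DR / (w * xi ^ 2)) ^ 2) by (apply Rmult_le_pos; [apply Rmult_le_pos; lra|apply pow2_ge_0]).
        assert (0 <= q * (Hv - 2 * Rv / q) ^ 2) by (apply Rmult_le_pos; [lra|apply pow2_ge_0]).
        assert (0 <= D ^ 2) by apply pow2_ge_0. lra. }
      assert (HS : 0 <= 4 * (ix * (/ K ^ 2 * Rv ^ 2)) + ix * (DR ^ 2 / w)).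
      { assert (0 <= ix * (/ K ^ 2 * Rv ^ 2)) by (apply Rmult_le_pos; lra).
        assert (0 <= ix * (DR ^ 2 / w)) by (apply Rmult_le_pos; lra). lra. }
      set (N := K * P * xi ^ 2 * Hv ^ 2 - 2 * D ^ 2 - w * xi ^ 2 * (Hv + DR / (w * xi ^ 2)) ^ 2
                 - q * (Hv - 2 * Rv / q) ^ 2) in *.
      set (S := 4 * (ix * (/ K ^ 2 * Rv ^ 2)) + ix * (DR ^ 2 / w)) in *.
      assert (0 <= e * - N) by (apply Rmult_le_pos; lra).
      assert (0 <= (1 - e) * S) by (apply Rmult_le_pos; lra).
      lra. }
  assert (HIAa : IA a = 0) by (unfold IA; apply (RInt_point (V:=R_CompleteNormedModule))).
  assert (HIBa : IB a = 0) by (unfold IB; apply (RInt_point (V:=R_CompleteNormedModule))).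
  assert (HIAn : IA nu = RInt (fun t => / kp t ^ 2 * r t ^ 2) a nu).
  { unfold IA, fA. apply (RInt_ext (V:=R_CompleteNormedModule)). intros x Hx.
    rewrite Rmin_left in Hx by lra. rewrite Rmax_right in Hx by lra.
    unfold cR. rewrite cl_id by lra. reflexivity. }
  assert (HIBn : IB nu = RInt (fun t => dr t ^ 2 / (Rabs (kp t * kpp t) + kp t ^ 2)) a nu).
  { unfold IB, fB. apply (RInt_ext (V:=R_CompleteNormedModule)). intros x Hx.
    rewrite Rmin_left in Hx by lra. rewrite Rmax_right in Hx by lra.
    unfold cDR. rewrite cl_id by lra. reflexivity. }
  assert (HIApos : 0 <= IA nu).
  { unfold IA. apply RInt_nonneg_cont; [lra| |].
    - intros y Hy. apply HfA. lra.
    - intros y Hy. unfold fA. assert (0 < kp y) by (apply kp_pos; lra).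
      apply Rmult_le_pos; [apply Rlt_le, Rinv_0_lt_compat; apply pow_lt; auto|apply pow2_ge_0]. }
  assert (HIBpos : 0 <= IB nu).
  { unfold IB. apply RInt_nonneg_cont; [lra| |].
    - intros y Hy. apply HfB. lra.
    - intros y Hy. unfold fB. assert (0 < kp y) by (apply kp_pos; lra).
      pose proof (Rabs_pos (kp y * kpp y)). pose proof (pow_lt (kp y) 2 H).
      apply Rmult_le_pos; [apply pow2_ge_0|apply Rlt_le, Rinv_0_lt_compat; lra]. }
  unfold Phi in Hdec. rewrite HIAa, HIBa in Hdec.
  unfold cD, cH, cR in Hdec. rewrite !cl_id in Hdec by lra.
  rewrite H0, H1 in Hdec.
  replace ((0 ^ 2 + kp a ^ 2 * xi ^ 2 * 0 ^ 2 - 2 * 0 * r a) * exp ((-2) * (a - a)) - 4 * (ix * 0) - ix * 0) with 0 in Hdec by ring.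
  rewrite <- HIAn, <- HIBn.
  assert (Hk : 0 < kp nu) by (apply kp_pos; lra).
  assert (Hx2 : 0 < xi ^ 2) by (apply pow2_gt_0; auto).
  assert (Hix : 0 < ix) by (unfold ix; apply Rinv_0_lt_compat; auto).
  set (S := 4 * (ix * IA nu) + ix * IB nu) in *.
  assert (HS : 0 <= S) by (unfold S; assert (0 <= ix * IA nu) by (apply Rmult_le_pos; lra);
     assert (0 <= ix * IB nu) by (apply Rmult_le_pos; lra); lra).
  set (M := dh nu ^ 2 + kp nu ^ 2 * xi ^ 2 * h nu ^ 2 - 2 * h nu * r nu) in *.
  assert (Hex : exp ((-2) * (nu - a)) * exp (2 * (nu - a)) = 1).
  { rewrite <- exp_plus. replace ((-2) * (nu - a) + 2 * (nu - a)) with 0 by ring. apply exp_0. }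
  assert (Hb1 : exp (2 * (nu - a)) <= exp (2 * b)) by (apply exp_le'; lra).
  assert (Hp : 0 < exp (2 * (nu - a))) by apply exp_pos.
  assert (HM : M <= S * exp (2 * (nu - a))).
  { replace M with (M * exp ((-2) * (nu - a)) * exp (2 * (nu - a))) by (rewrite Rmult_assoc, Hex; ring).
    apply Rmult_le_compat_r; [lra|]. unfold S. lra. }
  assert (HM2 : M <= S * exp (2 * b)) by (eapply Rle_trans; [apply HM|apply Rmult_le_compat_l; auto]).
  assert (Hq : 0 < kp nu ^ 2 * xi ^ 2) by (apply Rmult_lt_0_compat; [apply pow_lt|]; auto).
  set (q := kp nu ^ 2 * xi ^ 2) in *.
  assert (HE : dh nu ^ 2 + q * h nu ^ 2 - 2 * M - 4 * (/ q * r nu ^ 2)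
          = - dh nu ^ 2 - q * (h nu - 2 * r nu / q) ^ 2).
  { unfold M. field. lra. }
  assert (0 <= q * (h nu - 2 * r nu / q) ^ 2) by (apply Rmult_le_pos; [lra|apply pow2_ge_0]).
  assert (0 <= dh nu ^ 2) by apply pow2_ge_0.
  assert (HEb : dh nu ^ 2 + q * h nu ^ 2 <= 4 * (/ q * r nu ^ 2) + 2 * exp (2 * b) * S) by lra.
  assert (H1q : 0 <= / q * r nu ^ 2) by (apply Rmult_le_pos; [apply Rlt_le, Rinv_0_lt_compat; lra|apply pow2_ge_0]).
  assert (HA1 : 0 <= ix * IA nu) by (apply Rmult_le_pos; lra).
  assert (HB1 : 0 <= ix * IB nu) by (apply Rmult_le_pos; lra).
  assert (He2 : 0 < exp (2 * b)) by apply exp_pos.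
  unfold S in HEb.
  assert (exp (2 * b) * (ix * IA nu) >= 0) by (apply Rle_ge, Rmult_le_pos; lra).
  assert (exp (2 * b) * (ix * IB nu) >= 0) by (apply Rle_ge, Rmult_le_pos; lra).
  assert (exp (2 * b) * (/ q * r nu ^ 2) >= 0) by (apply Rle_ge, Rmult_le_pos; lra).
  nra.
Qed.

Theorem lemma4p7 (nu_star : R) (Hstar : 0 < nu_star < nu_cr) :
  exists C : R, 0 < C /\
  forall (eps xi : R) (r dr h dh d2h : R -> R),
    0 < eps < nu_star ->
    C1_on eps nu_star r dr ->
    C2_on eps nu_star h dh d2h ->
    (forall x, eps <= x <= nu_star ->
       d2h x + kp x ^ 2 * xi ^ 2 * h x = r x) ->
    h eps = 0 -> dh eps = 0 ->
    forall nu, eps <= nu <= nu_star ->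
      (xi <> 0 ->
        dh nu ^ 2 + kp nu ^ 2 * xi ^ 2 * h nu ^ 2
        <= C * ( / (kp nu ^ 2 * xi ^ 2) * r nu ^ 2
               + / xi ^ 2 * RInt (fun t => / kp t ^ 2 * r t ^ 2) eps nu
               + / xi ^ 2 * RInt (fun t => dr t ^ 2 /
                     (Rabs (kp t * kpp t) + kp t ^ 2)) eps nu)) /\
      dh nu ^ 2 + kp nu ^ 2 * xi ^ 2 * h nu ^ 2
        <= C * nu * RInt (fun t => r t ^ 2) eps nu.
Proof.
  exists (8 * exp (2 * nu_star) + 4).
  assert (He : 0 < exp (2 * nu_star)) by apply exp_pos.
  assert (He1 : 1 <= exp (2 * nu_star)).
  { rewrite <- exp_0. apply exp_le'. lra. }
  split; [lra|].
  intros eps xi r dr h dh d2h Heps Hr Hh Hode H0 H1 nu Hnu.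
  destruct (Req_dec nu eps) as [->|Hne].
  - rewrite H0, H1.
    rewrite !(RInt_point (V:=R_CompleteNormedModule)). change (@zero _) with 0.
    split.
    + intros Hxi. assert (Hk : 0 < kp eps) by (apply kp_pos; lra).
      assert (0 <= / (kp eps ^ 2 * xi ^ 2) * r eps ^ 2).
      { apply Rmult_le_pos; [|apply pow2_ge_0]. apply Rlt_le, Rinv_0_lt_compat.
        apply Rmult_lt_0_compat; [apply pow_lt; auto|apply pow2_gt_0; auto]. }
      apply Rle_trans with 0; [right; ring|].
      replace (/ (kp eps ^ 2 * xi ^ 2) * r eps ^ 2 + / xi ^ 2 * 0 + / xi ^ 2 * 0)
        with (/ (kp eps ^ 2 * xi ^ 2) * r eps ^ 2) by ring.
      apply Rmult_le_pos; lra.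
    + apply Rle_trans with 0; [right; ring|]. right; ring.
  - assert (Hlt : eps < nu) by (destruct Hnu as [[Hq|Hq] _]; [auto|congruence]).
    split.
    + intros Hxi. apply (energy1 eps nu_star xi r dr h dh d2h nu); auto; lra.
    + apply (energy2 eps nu_star xi r dr h dh d2h nu); auto; lra.
Qed.
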